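(* Let $x_i(t)\ge 0$ ($i,t\in[n]$) satisfy $\sum_{i\in[n]}x_i(t)\le 1$ for all $t\in[n]$, and let $\alpha_i$ be the arrival times produced by Discrete-Time Poisson Rounding from $x$. For any positive integer thresholds $(\theta_i)_{i\in[n]}$, $$\Pr\big[\forall i\in[n],\ \alpha_i>2\theta_i\big]\le\exp\Big(-2\sum_{i\in[n]}\sum_{\tau\in[\theta_i]}\bar x_i(\tau)\Big).$$
   Context: Here $[m]=\{1,\dots,m\}$ and $\bar x_i(t)=\frac1t\sum_{t'=1}^{\min\{t,n\}}x_i(t')$ for positive integers $t$ (so $\sum_i\bar x_i(t)\le 1$). Discrete-Time Poisson Rounding: independently at each step $\tau=1,2,\dots$, sample exactly one box $i\in[n]$ with probability $\bar x_i(\lceil\tau/2\rceil)$, or no box with the remaining probability $1-\sum_i\bar x_i(\lceil\tau/2\rceil)$. The arrival time $\alpha_i$ of box $i$ is the first step at which it is sampled ($\infty$ if never). *)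

(* Defs.v *)
From HB Require Import structures.
From mathcomp Require Import all_boot all_order all_algebra.
From mathcomp Require Import reals.
From mathcomp.analysis Require Import sequences exp.
Set Implicit Arguments. Unset Strict Implicit. Unset Printing Implicit Defensive.
Import Order.TTheory GRing.Theory Num.Theory.
Local Open Scope ring_scope.

(* x i t is x_i(t); only t in 1..n is meaningful. *)
Definition xbar {R : realType} {n : nat} (x : 'I_n -> nat -> R) (i : 'I_n) (t : nat) : R :=
  (t%:R)^-1 * \sum_(1 <= t' < (minn t n).+1) x i t'.

Definition step_prob {R : realType} {n : nat} (x : 'I_n -> nat -> R) (tau : nat)
  (o : option 'I_n) : R :=
  match o with
  | Some i => xbar x i (uphalf tau)
  | None => 1 - \sum_(i < n) xbar x i (uphalf tau)
  end.

(* Outcomes of the first T steps: omega k is the result of step tau = k+1.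
   Steps are independent, so the law of the first T steps is the product. *)
Definition traj_prob {R : realType} {n T : nat} (x : 'I_n -> nat -> R)
  (w : {ffun 'I_T -> option 'I_n}) : R :=
  \prod_(k < T) step_prob x k.+1 (w k).

(* Arrival time of box i observed within the first T steps:
   Some tau = first step tau (1-based) at which i is sampled; None = not
   sampled in steps 1..T, i.e. alpha_i > T. *)
Definition arrival {n T : nat} (w : {ffun 'I_T -> option 'I_n}) (i : 'I_n) : option nat :=
  let s := [seq k <- enum 'I_T | w k == Some i] in
  match s with
  | [::] => None
  | k :: _ => Some (nat_of_ord k).+1
  end.

(* alpha > b, where None means alpha > T (>= b under the theorem's hypothesis). *)
Definition arrival_gt (a : option nat) (b : nat) : bool :=
  match a with None => true | Some t => (b < t)%N end.

Definition prob_all_late {R : realType} {n T : nat} (x : 'I_n -> nat -> R)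
  (theta : 'I_n -> nat) : R :=
  \sum_(w : {ffun 'I_T -> option 'I_n} | [forall i, arrival_gt (arrival w i) (2 * theta i)])
     traj_prob x w.

(* Main.v *)
Require Import Defs.
From HB Require Import structures.
From mathcomp Require Import all_boot all_order all_algebra.
From mathcomp Require Import reals.
From mathcomp.analysis Require Import sequences exp.
From mathcomp Require Import zify.
Import Order.TTheory GRing.Theory Num.Theory.
Local Open Scope ring_scope.

Lemma sum_option (R : realType) (T : finType) (F : option T -> R) :
  \sum_o F o = F None + \sum_i F (Some i).
Proof.
rewrite (bigD1 None) //=; congr (_ + _).
rewrite (reindex_omap Some id) /=; last by case.
by apply: eq_bigl => i; rewrite eqxx.
Qed.

Lemma sum_pairs (R : realType) (F : nat -> R) m :
  \sum_(0 <= k < 2 * m) F k = \sum_(0 <= s < m) (F (2 * s)%N + F (2 * s).+1).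
Proof.
elim: m => [|m IH]; first by rewrite !big_geq.
have -> : (2 * m.+1 = (2 * m).+2)%N by rewrite mulnS.
rewrite [RHS]big_nat_recr //= -IH.
by rewrite !big_nat_recr //= addrA.
Qed.

Lemma arrival_gtP {n T : nat} (w : {ffun 'I_T -> option 'I_n}) (i : 'I_n) b :
  arrival_gt (arrival w i) b = [forall k : 'I_T, (w k == Some i) ==> (b < k.+1)%N].
Proof.
rewrite /arrival.
set s := [seq k <- enum 'I_T | w k == Some i].
have Hs : forall k, (k \in s) = (w k == Some i) by move=> k; rewrite mem_filter mem_enum andbT.
have tr : transitive (relpre (@nat_of_ord T) ltn).
  by move=> a b' c /= h1 h2; exact: ltn_trans h1 h2.
have so : sorted (relpre (@nat_of_ord T) ltn) s.
  apply: sorted_filter => //; rewrite -sorted_map val_enum_ord; exact: iota_ltn_sorted.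
case Es: s so Hs => [|k0 r] so Hs /=.
  apply/esym/forallP => k; apply/implyP; by rewrite -Hs.
apply/idP/forallP.
- move=> hb k; apply/implyP; rewrite -Hs inE => /orP [/eqP -> //|kr].
  have := order_path_min tr so; move/allP/(_ k kr) => /= hk.
  by apply: ltn_trans hb _.
- move/(_ k0)/implyP; apply; by rewrite -Hs mem_head.
Qed.

Theorem lemma3p5 (R : realType) (n : nat) (x : 'I_n -> nat -> R)
  (hx0 : forall (i : 'I_n) (t : nat), (1 <= t <= n)%N -> 0 <= x i t)
  (hx1 : forall t : nat, (1 <= t <= n)%N -> \sum_(i < n) x i t <= 1)
  (theta : 'I_n -> nat) (htheta : forall i, (0 < theta i)%N)
  (T : nat) (hT : forall i, (2 * theta i <= T)%N) :
  @prob_all_late R n T x theta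
    <= expR (- (2 * \sum_(i < n) \sum_(1 <= tau < (theta i).+1) xbar x i tau)).
Proof.
have xb_ge0 : forall i t, 0 <= xbar x i t.
  move=> i t; rewrite /xbar mulr_ge0 // ?invr_ge0 ?ler0n //.
  rewrite big_nat_cond; apply: sumr_ge0 => t' /andP [/andP [h1 h2] _].
  apply: hx0; rewrite h1 /=; rewrite ltnS in h2; exact: leq_trans h2 (geq_minr _ _).
have xb_le1 : forall t, (0 < t)%N -> \sum_i xbar x i t <= 1.
  move=> t t0; rewrite /xbar -mulr_sumr exchange_big /=.
  have H : \sum_(1 <= t' < (minn t n).+1) \sum_i x i t' <= (minn t n)%:R.
    apply: (@le_trans _ _ (\sum_(1 <= t' < (minn t n).+1) 1)).
      rewrite big_nat_cond [X in _ <= X]big_nat_cond; apply: ler_sum => t' /andP [/andP [h1 h2] _].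
      apply: hx1; rewrite h1 /=; rewrite ltnS in h2; exact: leq_trans h2 (geq_minr _ _).
    by rewrite sumr_const_nat subn1 /=.
  apply: le_trans (ler_wpM2l _ H) _; first by rewrite invr_ge0 ler0n.
  have H2 : (minn t n)%:R <= t%:R :> R by rewrite ler_nat geq_minl.
  apply: le_trans (ler_wpM2l _ H2) _; first by rewrite invr_ge0 ler0n.
  by rewrite mulVf // pnatr_eq0 -lt0n.
pose good (k : 'I_T) (o : option 'I_n) :=
  match o with None => true | Some i => (2 * theta i < k.+1)%N end.
pose G (k : 'I_T) o := if good k o then step_prob x k.+1 o else 0.
pose a (k : 'I_T) := \sum_(i | ~~ (2 * theta i < k.+1)%N) xbar x i (uphalf k.+1).
have ev : forall w : {ffun 'I_T -> option 'I_n},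
    [forall i, arrival_gt (arrival w i) (2 * theta i)] = [forall k, good k (w k)].
  move=> w; apply/idP/idP.
  - move/forallP => H; apply/forallP => k; rewrite /good; case E: (w k) => [i|] //.
    move: (H i); rewrite arrival_gtP => /forallP /(_ k); by rewrite E eqxx.
  - move/forallP => H; apply/forallP => i; rewrite arrival_gtP.
    apply/forallP => k; apply/implyP => /eqP E; move: (H k); by rewrite E.
have stepB : @prob_all_late R n T x theta = \prod_k \sum_o G k o.
  rewrite bigA_distr_bigA /prob_all_late big_mkcond; apply: eq_bigr => w _.
  rewrite ev; case: (boolP [forall k, good k (w k)]) => H.
  - rewrite /traj_prob; apply: eq_bigr => k _; by rewrite /G (forallP H k).
  - move/forallPn: H => [k Hk]; by rewrite (bigD1 k) //= /G (negbTE Hk) mul0r.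
have stepC : forall k, \sum_o G k o = 1 - a k.
  move=> k; rewrite sum_option /G /= /a.
  rewrite (bigID (fun i => (2 * theta i < k.+1)%N) predT) /=.
  rewrite [X in _ + X](bigID (fun i => (2 * theta i < k.+1)%N) predT) /=.
  rewrite [X in _ + (_ + X)]big1; last by move=> i /negbTE ->.
  rewrite addr0 [X in _ + X](eq_bigr (fun i => xbar x i (uphalf k.+1))); last by move=> i ->.
  by change (uphalf k.+1) with (k./2.+1); rewrite opprD addrA addrAC subrK.
have a_le : forall k, 0 <= 1 - a k.
  move=> k; rewrite subr_ge0; apply: le_trans (xb_le1 (uphalf k.+1) _); last by [].
  rewrite [X in _ <= X](bigID (fun i => ~~ (2 * theta i < k.+1)%N) predT) /= lerDl.
  by apply: sumr_ge0 => i _.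
have stepE : \sum_k a k = 2 * \sum_(i < n) \sum_(1 <= tau < (theta i).+1) xbar x i tau.
  rewrite /a (exchange_big_dep xpredT) //= mulr_sumr; apply: eq_bigr => i _.
  rewrite -(big_mkord (fun k => ~~ (2 * theta i < k.+1)%N) (fun k => xbar x i k./2.+1)).
  rewrite (@big_cat_nat _ _ _ (2 * theta i) 0 T) //= .
  rewrite [X in _ + X]big_nat_cond [X in _ + X]big1 ?addr0; last first.
    by move=> k /andP [/andP [h1 _]]; rewrite ltnS h1.
  rewrite big_nat_cond (eq_bigl (fun k => (0 <= k < 2 * theta i)%N && true)); last first.
    by move=> k /=; rewrite andbT ltnS -ltnNge andbb.
  rewrite -big_nat_cond sum_pairs.
  rewrite big_add1 /= mulr_sumr; apply: eq_bigr => s _.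
  have -> : ((2 * s)./2 = s)%N by rewrite mul2n doubleK.
  have -> : (uphalf (2 * s) = s)%N by rewrite mul2n; exact: uphalf_double.
  by rewrite (mulr_natl _ 2) mulr2n.
rewrite stepB (eq_bigr _ (fun k _ => stepC k)) -stepE.
apply: (@le_trans _ _ (\prod_k expR (- a k))).
  apply: ler_prod => k _; rewrite a_le /=.
  by rewrite -[X in X <= _]/(1 + - a k) expR_ge1Dx.
by rewrite -sumrN expR_sum.
Qed.
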